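(* Let $n\ge 2$ be an integer and $A\subseteq L_n$. If $(X_n,\tau(A))$ is $\sigma$-compact, then $(X_n,\tau(A))$ is second-countable.
   Context: For $\overline{x},\overline{a}\in\mathbb R^n$ let $|\overline{x}-\overline{a}|$ be the Euclidean distance and $B(\overline{a},\epsilon)=\{\overline{x}\in\mathbb R^n:|\overline{x}-\overline{a}|<\epsilon\}$. Let $P_n=\{\overline{x}\in\mathbb R^n: x_n>0\}$, $L_n=\{\overline{x}\in\mathbb R^n: x_n=0\}$, $X_n=P_n\cup L_n$. For $\overline{a}\in L_n$ and $\epsilon>0$ put $\overline{a(\epsilon)}=(a_1,\dots,a_{n-1},\epsilon)$ and $\tilde B(\overline{a},\epsilon)=\{\overline{a}\}\cup B(\overline{a(\epsilon)},\epsilon)$. For $A\subseteq L_n$, the topology $\tau(A)$ on $X_n$ is generated by the local bases: at $\overline{a}\in P_n$, the sets $B(\overline{a},\epsilon)$ with $0<\epsilon<a_n$; at $\overline{a}\in A$, the sets $B(\overline{a},\epsilon)\cap X_n$ with $\epsilon>0$; at $\overline{a}\in L_n\setminus A$, the sets $\tilde B(\overline{a},\epsilon)$ with $\epsilon>0$. *)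

(* Defs.v *)
From HB Require Import structures.
From mathcomp Require Import all_boot all_order all_algebra.
From mathcomp Require Import all_classical all_reals all_analysis.
Set Implicit Arguments. Unset Strict Implicit. Unset Printing Implicit Defensive.
Import Order.TTheory GRing.Theory Num.Theory.
Local Open Scope classical_set_scope.
Local Open Scope ring_scope.

Section TauA.
Variables (R : realType) (n : nat).

(* points of R^n are row vectors 'rV[R]_n; coordinate x_k (1-based) is x 0 (k-1) *)

Definition xlast (x : 'rV[R]_n) : R :=
  if [pick i : 'I_n | val i == n.-1] is Some i then x 0 i else 0.

Definition edist (x a : 'rV[R]_n) : R :=
  Num.sqrt (\sum_(i < n) (x 0 i - a 0 i) ^+ 2).

Definition eball (a : 'rV[R]_n) (eps : R) : set 'rV[R]_n :=
  [set x | edist x a < eps].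

Definition Pn : set 'rV[R]_n := [set x | 0 < xlast x].
Definition Ln : set 'rV[R]_n := [set x | xlast x = 0].
Definition Xset : set 'rV[R]_n := [set x | 0 <= xlast x].

Definition a_eps (a : 'rV[R]_n) (eps : R) : 'rV[R]_n :=
  \row_(i < n) (if val i == n.-1 then eps else a 0 i).

Definition tball (a : 'rV[R]_n) (eps : R) : set 'rV[R]_n :=
  [set a] `|` eball (a_eps a eps) eps.

Definition tau_basic (A : set 'rV[R]_n) (U : set 'rV[R]_n) : Prop :=
  (exists a eps, Pn a /\ 0 < eps /\ eps < xlast a /\ U = eball a eps) \/
  (exists a eps, A a /\ 0 < eps /\ U = eball a eps `&` Xset) \/
  (exists a eps, Ln a /\ ~ A a /\ 0 < eps /\ U = tball a eps).

(* the carrier X_n, tagged by A so that it carries the topology tau(A) *)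
Definition XnA (A : set 'rV[R]_n) : Type := {x : 'rV[R]_n | 0 <= xlast x}.

End TauA.

HB.instance Definition _ (R : realType) n (A : set 'rV[R]_n) :=
  Choice.copy (XnA A) {x : 'rV[R]_n | 0 <= xlast x}.

Definition tau_subbase (R : realType) n (A : set 'rV[R]_n) : set (set (XnA A)) :=
  [set V | exists U, tau_basic A U /\ V = (fun p : XnA A => U (val p))].

HB.instance Definition _ (R : realType) n (A : set 'rV[R]_n) :=
  isSubBaseTopological.Build (XnA A) (@tau_subbase R n A) id.

Definition sigma_compact (T : topologicalType) : Prop :=
  exists K : nat -> set T, (forall i, compact (K i)) /\ \bigcup_i K i = setT.

(* Main.v *)
Require Import Defs.
From HB Require Import structures.
From mathcomp Require Import all_boot all_order all_algebra.
From mathcomp Require Import all_classical all_reals all_analysis.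
From mathcomp Require Import finmap.
From mathcomp Require Import ring lra.
Set Implicit Arguments. Unset Strict Implicit. Unset Printing Implicit Defensive.
Import Order.TTheory GRing.Theory Num.Theory.
Import numFieldNormedType.Exports.
Local Open Scope classical_set_scope.
Local Open Scope ring_scope.

Local Notation edist := Defs.edist.

Section Helpers.
Variables (R : realType) (n : nat).
Hypothesis hn : (0 < n)%N.

Definition ilast : 'I_n := Ordinal (etrans (ltn_predL n) hn).

Lemma xlastE (x : 'rV[R]_n) : xlast x = x 0 ilast.
Proof.
rewrite /xlast; case: pickP => [i /eqP hi|h].
  by congr (x 0 _); apply: val_inj.
by have := h ilast; rewrite /= eqxx.
Qed.

Lemma a_epsE (a : 'rV[R]_n) e i :
  a_eps a e 0 i = if i == ilast then e else a 0 i.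
Proof.
rewrite /a_eps mxE.
have -> : (val i == n.-1) = (i == ilast) by [].
by [].
Qed.

Lemma coord_le_edist (x y : 'rV[R]_n) i : `|(x 0 i - y 0 i)| <= edist x y.
Proof.
rewrite /edist -sqrtr_sqr; apply: ler_wsqrtr.
rewrite (bigD1 i) //= lerDl; apply: sumr_ge0 => j _; exact: sqr_ge0.
Qed.

Lemma edist_ge0 (x y : 'rV[R]_n) : 0 <= edist x y.
Proof. exact: sqrtr_ge0. Qed.

Lemma ballE (x y : 'rV[R]_n) e :
  ball x e y <-> (0 < e /\ forall i, `|(x 0 i - y 0 i)| < e).
Proof.
split=> [[e0 H]|[e0 H]]; split=> // i.
  by have := H 0 i.
by move=> j; rewrite (ord1 i); exact: H.
Qed.

Lemma cont_sum (T : topologicalType) (I : Type) (r : seq I) (F : I -> T -> R) :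
  (forall i, continuous (F i)) -> continuous (fun z => \sum_(i <- r) F i z).
Proof.
move=> HF; elim: r => [|i r IH].
  under eq_fun do rewrite big_nil.
  exact: cst_continuous.
under eq_fun do rewrite big_cons.
by move=> z; apply: continuousD; [exact: HF|exact: IH].
Qed.

Lemma continuous_edist (b : 'rV[R]_n) : continuous (fun z : 'rV[R]_n => edist z b).
Proof.
move=> z; rewrite /edist.
apply: (@continuous_comp _ _ _ (fun z : 'rV[R]_n => \sum_(i < n) (z 0 i - b 0 i) ^+ 2) (@Num.sqrt R)); last exact: sqrt_continuous.
apply: cont_sum => i {}z.
under eq_fun do rewrite expr2.
have hc : continuous (fun z : 'rV[R]_n => z 0 i - b 0 i).
  move=> w; apply: continuousB; [exact: coord_continuous|exact: cst_continuous].
exact: (continuousM (hc z) (hc z)).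
Qed.

Lemma eball_open (b : 'rV[R]_n) e : open (eball b e).
Proof.
rewrite /eball.
have -> : [set x | edist x b < e] = (fun z => edist z b) @^-1` [set x | x < e] by [].
apply: open_comp; last exact: open_lt.
by move=> x _; exact: continuous_edist.
Qed.


Variable A : set 'rV[R]_n.

Definition lift (E : set 'rV[R]_n) : set (XnA A) := fun p => E (val p).

Lemma subbase_open U : tau_basic A U -> open (lift U).
Proof.
move=> hU.
exists [set lift U].
  move=> _ ->.
  exists [fset (lift U)]%fset.
    by move=> V; rewrite inE => /eqP ->; apply/mem_set; exists U.
  rewrite predeqE => p; split => [h|Up V].
    by apply: (h (lift U)); rewrite /= inE.
  by rewrite /= inE => /eqP ->.
rewrite predeqE => p; split; first by move=> [V -> ].
by move=> Up; exists (lift U).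
Qed.

Lemma subbase_nbhs (p : XnA A) U W :
  tau_basic A U -> U (val p) -> lift U `<=` W -> nbhs p W.
Proof.
move=> hU Up UW; rewrite nbhsE; exists (lift U) => //.
by split => //; exact: subbase_open.
Qed.

Lemma open_of (W : set (XnA A)) : (forall p, W p -> nbhs p W) -> open W.
Proof. by move=> h; rewrite openE. Qed.

Lemma nbhs_subbaseP (p : XnA A) V : nbhs p V ->
  exists F : {fset set (XnA A)}, (forall U : set (XnA A), U \in F -> @tau_subbase R n A U) /\
    (forall U : set (XnA A), U \in F -> U p) /\ \bigcap_(U in [set` F]) U `<=` V.
Proof.
rewrite nbhsE => -[X [oX Xp] XV].
case: oX Xp XV => D' sD' <- [W D'W Wp] XV.
have [F Fsub Weq] := sD' W D'W.
exists F; split.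
  by move=> U /Fsub /set_mem.
split.
  by move=> U UF; move: Wp; rewrite -Weq; apply.
by move=> q Fq; apply: XV; exists W => //; rewrite -Weq.
Qed.


Lemma archi_inv (d : R) : 0 < d -> exists k : nat, k.+1%:R^-1 < d.
Proof.
move=> d0; have [N _ hN] := near_infty_natSinv_lt (PosNum d0).
by exists N; apply: hN => /=.
Qed.

Lemma edist_xx (x : 'rV[R]_n) : edist x x = 0.
Proof.
rewrite /edist big1 ?sqrtr0 // => i _; by rewrite subrr expr0n.
Qed.

Lemma edist_lt (x y : 'rV[R]_n) e : 0 < e ->
  (edist x y < e) = (\sum_(i < n) (x 0 i - y 0 i) ^+ 2 < e ^+ 2).
Proof.
move=> e0; rewrite /edist.
have -> : e = Num.sqrt (e ^+ 2) by rewrite sqrtr_sqr gtr0_norm.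
rewrite ltr_sqrt ?sqrtr_sqr ?gtr0_norm //; exact: exprn_gt0.
Qed.

Lemma tball_sub_ball (x y : 'rV[R]_n) e : 0 < e -> xlast x = 0 ->
  tball x (e / 2) y -> ball x e y.
Proof.
move=> e0 hx [->|hy]; first exact: ballxx.
apply/ballE; split => // i.
rewrite /eball /= in hy.
have he2 : 0 < e / 2 by rewrite divr_gt0.
have := coord_le_edist y (a_eps x (e / 2)) i; rewrite a_epsE.
case: eqP => [->|_] h.
  rewrite xlastE in hx; rewrite hx sub0r normrN.
  have h1 : `|y 0 ilast - e / 2| < e / 2 by apply: le_lt_trans hy.
  have : `|y 0 ilast| <= `|y 0 ilast - e / 2| + e / 2.
    by have := ler_normD (y 0 ilast - e / 2) (e / 2); rewrite subrK (ger0_norm (ltW he2)).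
  move=> h2; apply: le_lt_trans h2 _.
  by rewrite [X in _ < X](splitr e) ltrD2r.
rewrite distrC; apply: le_lt_trans h _; apply: lt_le_trans hy _.
rewrite ler_pdivrMr //; lra.
Qed.

Lemma tball_Ln (x y : 'rV[R]_n) e : 0 < e -> tball x e y -> xlast y = 0 -> y = x.
Proof.
move=> e0 [->//|hy] hy0; exfalso.
have := coord_le_edist y (a_eps x e) ilast; rewrite a_epsE eqxx -xlastE hy0 sub0r normrN.
by rewrite gtr0_norm // => h; have := le_lt_trans h hy; rewrite ltxx.
Qed.

Lemma sum_split (y a : 'rV[R]_n) e :
  \sum_(i < n) (y 0 i - a_eps a e 0 i) ^+ 2 =
  \sum_(i < n | i != ilast) (y 0 i - a 0 i) ^+ 2 + (y 0 ilast - e) ^+ 2.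
Proof.
rewrite (bigD1 ilast) //= addrC a_epsE eqxx; congr (_ + _).
by apply: eq_bigr => i /negbTE hi; rewrite a_epsE hi.
Qed.

Lemma tball_mono (x y : 'rV[R]_n) e1 e2 : 0 < e1 -> e1 <= e2 -> 0 <= xlast y ->
  tball x e1 y -> tball x e2 y.
Proof.
move=> e10 e12 hy [->|h]; first by left.
right; rewrite /eball /= in h *.
have e20 : 0 < e2 by apply: lt_le_trans e12.
rewrite edist_lt // sum_split; rewrite edist_lt // sum_split in h.
set S := \sum_(i < n | i != ilast) _ in h *.
have S0 : 0 <= S by apply: sumr_ge0 => i _; exact: sqr_ge0.
rewrite xlastE in hy.
set t := y 0 ilast in h hy *.
nra.
Qed.

Lemma open_sub_tball (O : set 'rV[R]_n) (x : 'rV[R]_n) : open O -> O x -> xlast x = 0 ->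
  exists2 e, 0 < e & tball x e `<=` O.
Proof.
move=> oO Ox hx.
have : nbhs x O by rewrite nbhsE; exists O.
move=> /nbhs_ballP [e /= e0 eO].
exists (e / 2); first by rewrite divr_gt0.
by move=> y /(@tball_sub_ball x y e e0 hx) /eO.
Qed.


Lemma open_lift (E : set 'rV[R]_n) : open E -> open (lift E).
Proof.
move=> oE; apply: open_of => p Ep.
have : nbhs (val p) E by rewrite nbhsE; exists E.
move=> /nbhs_ballP [e /= e0 eE].
have hp : 0 <= xlast (val p) := valP p.
have [hpos|hz] : 0 < xlast (val p) \/ xlast (val p) = 0.
  move: hp; set t := xlast (val p) => hp.
  by rewrite le_eqVlt in hp; case/orP: hp => [/eqP ->|]; [right|left].
- pose m := Num.min e (xlast (val p) / 2).
  have m0 : 0 < m by rewrite lt_min e0 divr_gt0.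
  apply: (@subbase_nbhs p (eball (val p) m)).
  + left; exists (val p), m; split => //; split => //; split => //.
    by rewrite gt_min; apply/orP; right; lra.
  + by rewrite /eball /= edist_xx.
  + move=> q hq; apply: eE; apply/ballE; split => // i; rewrite distrC.
    apply: le_lt_trans (@coord_le_edist _ _ i) _; apply: lt_le_trans hq _.
    by rewrite ge_min lexx.
- case: (pselect (A (val p))) => hAp.
  + apply: (@subbase_nbhs p (eball (val p) e `&` Xset (R:=R) (n:=n))).
    * by right; left; exists (val p), e.
    * by split; [rewrite /eball /= edist_xx|exact: hp].
    * move=> q [hq _]; apply: eE; apply/ballE; split => // i; rewrite distrC.
      by apply: le_lt_trans (@coord_le_edist _ _ i) _.
  + apply: (@subbase_nbhs p (tball (val p) (e / 2))).
    * right; right; exists (val p), (e / 2); split => //; split => //.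
      by rewrite divr_gt0.
    * by left.
    * by move=> q hq; apply: eE; exact: tball_sub_ball.
Qed.

Definition ext (W : set (XnA A)) : set 'rV[R]_n :=
  [set y | forall q : XnA A, val q = y -> W q].

Lemma B1 (p : XnA A) U : ~ (xlast (val p) = 0 /\ ~ A (val p)) ->
  @tau_subbase R n A U -> U p -> nbhs (val p) (ext U).
Proof.
move=> hC [U0 [hU0 ->]] Up.
suff hO : exists O, [/\ open O, O (val p) &
    forall q : XnA A, O (val q) -> U0 (val q)].
  have [W0 [oO Op OU]] := hO.
  by rewrite nbhsE; exists W0 => // y Oy q hq; apply: OU; rewrite hq.
case: hU0 Up => [[a [e [_ [_ [_ ->]]]]]|[[a [e [_ [_ ->]]]]|[a [e [La [nA [e0 ->]]]]]]] Up.
- by exists (eball a e); split => //; exact: (@eball_open a e).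
- exists (eball a e); split; [exact: (@eball_open a e)| by case: Up|].
  by move=> q h; split => //; exact: (valP q).
- case: Up => [hpa|hpe].
  + by exfalso; apply: hC; rewrite hpa.
  + exists (eball (a_eps a e) e); split => //; first exact: (@eball_open (a_eps a e) e).
    by move=> q h; right.
Qed.

Lemma B1all (p : XnA A) (F : {fset set (XnA A)}) (V : set (XnA A)) :
  ~ (xlast (val p) = 0 /\ ~ A (val p)) ->
  (forall U : set (XnA A), U \in F -> @tau_subbase R n A U) ->
  (forall U : set (XnA A), U \in F -> U p) ->
  \bigcap_(U in [set` F]) U `<=` V ->
  exists2 e, 0 < e & forall q : XnA A, ball (val p) e (val q) -> V q.
Proof.
move=> hC Fsub Fp FV.
have : nbhs (val p) (\bigcap_(U in [set` F]) ext U).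
  by apply: filter_bigI => U UF; apply: B1 => //; [exact: Fsub|exact: Fp].
move=> /nbhs_ballP [e e0 he]; exists e => // q hq; apply: FV => U UF.
exact: (he _ hq U UF q erefl).
Qed.

Lemma B2 (p : XnA A) U : xlast (val p) = 0 ->
  @tau_subbase R n A U -> U p ->
  exists2 e, 0 < e & forall q : XnA A, tball (val p) e (val q) -> U q.
Proof.
move=> hz [U0 [hU0 ->]] Up.
case: hU0 Up => [[a [e [_ [_ [_ ->]]]]]|[[a [e [_ [_ ->]]]]|[a [e [La [nA [e0 ->]]]]]]] Up.
- have [d d0 hd] := @open_sub_tball _ _ (@eball_open a e) Up hz.
  by exists d => // q /hd.
- case: Up => Up _.
  have [d d0 hd] := @open_sub_tball _ _ (@eball_open a e) Up hz.
  by exists d => // q /hd h; split => //; exact: (valP q).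
- case: Up => [hpa|hpe].
  + by exists e => // q; rewrite hpa.
  + have [d d0 hd] := @open_sub_tball _ _ (@eball_open (a_eps a e) e) hpe hz.
    by exists d => // q /hd; right.
Qed.

Lemma B2all (p : XnA A) (F : {fset set (XnA A)}) (V : set (XnA A)) :
  xlast (val p) = 0 ->
  (forall U : set (XnA A), U \in F -> @tau_subbase R n A U) ->
  (forall U : set (XnA A), U \in F -> U p) ->
  \bigcap_(U in [set` F]) U `<=` V ->
  exists2 e, 0 < e & forall q : XnA A, tball (val p) e (val q) -> V q.
Proof.
move=> hz Fsub Fp FV.
pose G := filter_from [set e : R | 0 < e]
  (fun e => [set q : XnA A | tball (val p) e (val q)]).
have FG : Filter G.
  apply: filter_from_filter; first by exists 1 => /=.
  move=> i j /= i0 j0; exists (Num.min i j); first by rewrite /= lt_min i0 j0.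
  have m0 : 0 < Num.min i j by rewrite lt_min i0 j0.
  move=> q /= hq; split; apply: (@tball_mono _ _ _ _ m0 _ (valP q) hq).
    by rewrite ge_min lexx.
  by rewrite ge_min lexx orbT.
have : G (\bigcap_(U in [set` F]) U).
  apply: filter_bigI => U UF.
  by have [e e0 he] := @B2 p U hz (Fsub U UF) (Fp U UF); exists e.
by move=> [e e0 he]; exists e => // q hq; apply: FV; exact: he.
Qed.


End Helpers.

Lemma xlast0_ge0 (R : realType) n : 0 <= xlast (0 : 'rV[R]_n).
Proof. by rewrite /xlast; case: pickP => [i _|_]; rewrite ?mxE. Qed.

HB.instance Definition _ (R : realType) n (A : set 'rV[R]_n) :=
  isPointed.Build (XnA A) (exist _ (0 : 'rV[R]_n) (xlast0_ge0 R n)).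

Section Helpers2.
Variables (R : realType) (n : nat).
Hypothesis hn : (0 < n)%N.
Variable A : set 'rV[R]_n.

Lemma iso_exists (K : set (XnA A)) (Kc : compact K) (p0 : XnA A) :
  K p0 -> xlast (val p0) = 0 -> ~ A (val p0) ->
  exists k : nat, forall p : XnA A, K p -> xlast (val p) = 0 ->
    ball (val p0) (k.+1%:R^-1) (val p) -> val p = val p0.
Proof.
move=> Kp0 hz nA; set c := val p0.
move: Kc; rewrite compact_cover => Kc.
pose f (j : nat) : set (XnA A) :=
  if j is j'.+1 then @lift R n A (~` closed_ball c (j'.+1%:R^-1)) else @lift R n A (tball c 1).
have fo : forall j, [set: nat] j -> open (f j).
  case => [|j] _ /=.
  - by apply: subbase_open; right; right; exists c, 1; split => //; split => //.
  - by apply: (open_lift hn); apply: closed_openC; exact: closed_ball_closed.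
have cov : K `<=` cover [set: nat] f.
  move=> p Kp; case: (eqVneq (val p) c) => [hpc|hpc].
    by exists 0%N => //=; rewrite /lift hpc; left.
  have [j hj] : exists j, val p 0 j != c 0 j.
    case: (pselect (exists j, val p 0 j != c 0 j)) => [//|hn'].
    exfalso; move/eqP: hpc; apply; apply/rowP => j.
    by apply/eqP/negPn/negP => h; apply: hn'; exists j.
  set d := `|c 0 j - val p 0 j|.
  have d0 : 0 < d by rewrite normr_gt0 subr_eq0 eq_sym.
  have d20 : 0 < d / 2 by rewrite divr_gt0.
  have [k hk] := archi_inv d20.
  exists k.+1 => //= hcb.
  have hk' : k.+1%:R^-1 < d by apply: lt_le_trans hk _; rewrite ler_pdivrMr //; lra.
  have k0 : 0 < k.+1%:R^-1 :> R by rewrite invr_gt0.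
  have := closed_ball_subset k0 hk' hcb.
  move=> /ballE [_ /(_ j)]; by rewrite ltxx.
have [D' _ hD'] := Kc _ _ _ fo cov.
exists (\max_(j <- D') j)%N => p Kp hp hb.
have [j jD' fj] := hD' p Kp.
case: j jD' fj => [|j] jD' /= fj.
  exact: (tball_Ln hn ltr01 fj hp).
exfalso; apply: fj; apply: subset_closed_ball; apply: le_ball hb.
have hj : (j.+1 <= \max_(j <- D') j)%N.
  exact: (leq_bigmax_seq (F := id) (P := xpredT) _ jD').
rewrite lef_pV2 ?posrE // ler_nat; exact: leqW.
Qed.


Definition ratv (q : 'rV[rat]_n) : 'rV[R]_n := map_mx ratr q.

Lemma rat_approx (x : 'rV[R]_n) d : 0 < d ->
  exists q : 'rV[rat]_n, forall i, `|x 0 i - ratv q 0 i| < d.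
Proof.
move=> d0.
pose S i := [set r : rat | `|x 0 i - ratr r| < d].
have hS i : exists r, S i r.
  have : x 0 i - d < x 0 i + d by rewrite ltrD2l gtrN.
  move=> /rat_in_itvoo [r hr]; exists r; rewrite /S /= ltr_distlC.
  by rewrite in_itv /= in hr.
exists (\row_i xget 0%R (S i)) => i.
rewrite /ratv !mxE; exact: (xgetPex 0%R (hS i)).
Qed.

Lemma rat_ball (x : 'rV[R]_n) e : 0 < e -> exists q r,
  ball (ratv q) (ratr r) x /\ ball (ratv q) (ratr r) `<=` ball x e.
Proof.
move=> e0.
have e30 : 0 < e / 3 by rewrite divr_gt0.
have [q hq] := rat_approx x e30.
have : e / 3 < 2 * e / 3 by rewrite ltr_pM2r ?invr_gt0 //; lra.
move=> /rat_in_itvoo [r]; rewrite in_itv /= => /andP [r1 r2].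
exists q, r; split.
  apply/ballE; split => [|i]; first by apply: lt_trans r1.
  by rewrite distrC; apply: lt_trans (hq i) r1.
move=> y /ballE [_ hy]; apply/ballE; split => // i.
apply: le_lt_trans (ler_distD (ratv q 0 i) _ _) _.
have := hq i; have := hy i; lra.
Qed.

End Helpers2.

Theorem mainTheorem15 (R : realType) (n : nat) (hn : (2 <= n)%N)
  (A : set 'rV[R]_n) (hA : A `<=` @Ln R n) :
  sigma_compact (XnA A) -> @second_countable (XnA A).
Proof.
move=> [K [Kc KU]].
have hn0 : (0 < n)%N := ltnW hn.
pose Iso i k (c : 'rV[R]_n) := exists p : XnA A, [/\ K i p, val p = c, xlast c = 0, ~ A c &
  forall p' : XnA A, K i p' -> xlast (val p') = 0 -> ball c (k.+1%:R^-1) (val p') -> val p' = c].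
pose P i k q c := Iso i k c /\ ball (@ratv R n q) (k.+1%:R^-1 / 2) c.
pose f1 (qr : 'rV[rat]_n * rat) : set (XnA A) := lift (ball (@ratv R n qr.1) (ratr qr.2)).
pose f2 (t : nat * nat * 'rV[rat]_n * nat) : set (XnA A) :=
  let: (i, k, q, m) := t in
  [set p | P i k q (xget 0 (P i k q)) /\ tball (xget 0 (P i k q)) (m.+1%:R^-1) (val p)].
pose f (s : ('rV[rat]_n * rat) + (nat * nat * 'rV[rat]_n * nat)) :=
  match s with inl a => f1 a | inr b => f2 b end.
exists (range f).
  apply: sub_countable (card_image_le f setT) _; exact: countableP.
split.
  move=> _ [[a|b] _ <-] /=.
    by apply: (open_lift hn0); exact: ball_open.
  case: b => [[[i k] q] m] /=; apply: open_of => p [hP ht].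
  apply: (subbase_nbhs (p := p) (U := tball (xget 0 (P i k q)) (m.+1%:R^-1))) => //.
    case: hP => [[p2 [_ _ hz2 nA2 _]] _].
    right; right; exists (xget 0 (P i k q)), (m.+1%:R^-1).
    split; first exact: hz2.
    split; first exact: nA2.
    by split; first rewrite invr_gt0.
move=> x V /nbhs_subbaseP [F [Fsub [Fp FV]]].
change (filter_from [set U | range f U /\ U x] id V).
case: (pselect (xlast (val x) = 0 /\ ~ A (val x))) => [[hz nA]|hC]; last first.
  have [e e0 he] := B1all hC Fsub Fp FV.
  have [q [r [hx hsub]]] := rat_ball (val x) e0.
  exists (f1 (q, r)); first by split; [exists (inl (q, r))|exact: hx].
  by move=> p hp; apply: he; exact: hsub.
have [e e0 he] := B2all hn0 hz Fsub Fp FV.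
have : (\bigcup_i K i) x by rewrite KU.
move=> [i _ Kix].
have [k hk] := iso_exists hn0 (Kc i) Kix hz nA.
have r0 : 0 < k.+1%:R^-1 / 2 :> R by rewrite divr_gt0 // invr_gt0.
have [q hq] := rat_approx (val x) r0.
have [m hm] := archi_inv e0.
have Px : P i k q (val x).
  split; first by exists x; split.
  by apply/ballE; split => // j; rewrite distrC.
set c := xget 0 (P i k q).
have Pc : P i k q c := xgetPex 0 (ex_intro _ _ Px).
have cx : val x = c.
  case: Pc => [[p2 [Kp2 vp2 hz2 nA2 iso2]] hb2].
  apply: iso2 => //; apply/ballE; split => [|j]; first by rewrite invr_gt0.
  case/ballE: hb2 => _ /(_ j) hb2; have := hq j.
  move: hb2; rewrite distrC => h1 h2.
  apply: le_lt_trans (ler_distD (ratv R q 0 j) _ _) _.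
  rewrite (distrC (ratv R q 0 j)).
  set r := k.+1%:R^-1 in h1 h2 *; lra.
exists (f2 (i, k, q, m)).
  split; first by exists (inr (i, k, q, m)).
  by rewrite /= -/c; split => //; rewrite -cx; left.
move=> p /= [_ hp]; apply: he; rewrite cx.
have m0 : 0 < m.+1%:R^-1 :> R by rewrite invr_gt0.
exact: (tball_mono hn0 m0 (ltW hm) (valP p) hp).
Qed.
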